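(* Let $K,L,T,r$ be positive integers with $L\le K$ and $1\le r\le\min\{K,T\}$, and let $(\alpha,\beta)$ be the $\mathsf{GASP}_r$ vectors. For $1\le i\le T$ let $P_i=\{\alpha_k+\beta_c: 1\le k\le K+i-1,\ 1\le c\le L+T\}$, $L_i=((\alpha_{\mathrm s})_i+\operatorname{Set}(\beta_{\mathrm p}))\cap P_i$ and $R_i=((\alpha_{\mathrm s})_i+\operatorname{Set}(\beta_{\mathrm s}))\cap P_i$. Then $|L_i|=\min\{L,2+\lfloor (T-1-i)/K\rfloor\}$ if $1\le i\le r$, and $|L_i|=L$ if $r+1\le i\le T$; and $|R_i|=\max\{0,K+T-KL-1\}$ if $i=1$, $|R_i|=\max\{0,T-K+r-1\}$ if $i\ge2$ and $i\equiv1\pmod r$, and $|R_i|=T-1$ if $i\not\equiv1\pmod r$.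
   Context: The code $\mathsf{GASP}_r$ ($L\le K$, $1\le r\le\min\{K,T\}$) consists of the vectors $\alpha=(\alpha_{\mathrm p}\mid\alpha_{\mathrm s})$ (entries $\alpha_1,\ldots,\alpha_{K+T}$) and $\beta=(\beta_{\mathrm p}\mid\beta_{\mathrm s})$ (entries $\beta_1,\ldots,\beta_{L+T}$) with $\alpha_{\mathrm p}=(0,1,\ldots,K-1)$; $\alpha_{\mathrm s}$ the $T$ smallest elements of $\{KL+j+Kt: 0\le j\le r-1,\ t\in\mathbb{Z}_{\ge0}\}$ in increasing order (so $(\alpha_{\mathrm s})_i=\alpha_{K+i}$); $\beta_{\mathrm p}=(0,K,\ldots,K(L-1))$; $\beta_{\mathrm s}=(KL,\ldots,KL+T-1)$. $\operatorname{Set}(v)$ is the set of entries of $v$ and $x+B=\{x+b:b\in B\}$. (Thus $L_i$, $R_i$ are the integers in the first $L$, resp. last $T$, entries of row $K+i$ of the table $(\alpha_k+\beta_c)_{k,c}$ that already appear in its first $K+i-1$ rows.) *)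

(* Defs.v *)
From mathcomp Require Import all_boot all_order all_algebra.
Set Implicit Arguments. Unset Strict Implicit. Unset Printing Implicit Defensive.

(* GASP_r code vectors; all indices are 1-based, as in the paper. *)

(* membership in {KL + j + Kt : 0 <= j <= r-1, t >= 0}; for x < B it suffices
   to range t over t < B (since x >= K t >= t when K >= 1). *)
Definition inS (K L r B : nat) (x : nat) : bool :=
  has (fun j => has (fun t => x == K * L + j + K * t) (iota 0 B)) (iota 0 r).

(* bound: the T elements KL + K t (t < T) lie below K*L + K*T, so the first T
   elements (in increasing order) of the set below this bound are exactly the
   T smallest elements of the set. *)
Definition gasp_bound (K L T : nat) : nat := K * L + K * T.

Definition alpha_s (K L T r : nat) (i : nat) : nat :=
  nth 0 [seq x <- iota 0 (gasp_bound K L T) | inS K L r (gasp_bound K L T) x] i.-1.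

Definition alpha (K L T r : nat) (k : nat) : nat :=
  if k <= K then k.-1 else alpha_s K L T r (k - K).

Definition beta (K L T : nat) (c : nat) : nat :=
  if c <= L then K * c.-1 else K * L + (c - L).-1.

Definition Pset (K L T r i : nat) : seq nat :=
  [seq alpha K L T r k + beta K L T c | k <- iota 1 (K + i - 1), c <- iota 1 (L + T)].

Definition Lset (K L T r i : nat) : seq nat :=
  undup [seq x <- [seq alpha_s K L T r i + beta K L T c | c <- iota 1 L]
        | x \in Pset K L T r i].

Definition Rset (K L T r i : nat) : seq nat :=
  undup [seq x <- [seq alpha_s K L T r i + beta K L T c | c <- iota (L + 1) T]
        | x \in Pset K L T r i].

(* Main.v *)
Require Import Defs.
From mathcomp Require Import all_boot all_order all_algebra.
From mathcomp Require Import zify.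
Import Order.TTheory GRing.Theory Num.Theory.

Definition g (K L r n : nat) : nat := K*L + K*(n%/r) + n%%r.

Lemma gE K L r q s : s < r -> g K L r (q*r + s) = K*L + K*q + s.
Proof.
move=> hs; have r0 : 0 < r by apply: leq_ltn_trans hs.
by rewrite /g divnMDl // divn_small // addn0 modnMDl modn_small.
Qed.

Lemma inS_char K L r B x : 0 < K -> r <= K -> x < B ->
  inS K L r B x = (K*L <= x) && ((x - K*L) %% K < r).
Proof.
move=> K0 rK xB; apply/idP/idP.
- case/hasP => j; rewrite mem_iota => /andP[_ jr] /hasP[t _ /eqP ->].
  rewrite -addnA leq_addr /= addKn addnC mulnC modnMDl modn_small //.
  exact: leq_trans jr rK.
- case/andP => h1 h2; apply/hasP; exists ((x - K*L) %% K); first by rewrite mem_iota.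
  apply/hasP; exists ((x - K*L) %/ K).
    rewrite mem_iota /= add0n; apply: leq_ltn_trans (leq_div _ _) _.
    by apply: leq_ltn_trans (leq_subr _ _) xB.
  by apply/eqP; rewrite -addnA [_ %% K + _]addnC [K * (_ %/ _)]mulnC -divn_eq subnKC.
Qed.

Lemma map_g_block K L r t : 0 < r ->
  map (g K L r) (iota (r*t) r) = iota (K*L + K*t) r.
Proof.
move=> r0; apply: (@eq_from_nth _ 0); rewrite ?size_map !size_iota // => u ur.
by rewrite (nth_map 0) ?size_iota // !nth_iota // mulnC gE.
Qed.

Lemma filter_all_iota K L T r t : 0 < K -> 0 < r -> r <= K -> t <= T ->
  [seq x <- iota (K*L) (K*t) | inS K L r (K*L + K*T) x] = map (g K L r) (iota 0 (r*t)).
Proof.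
move=> K0 r0 rK; elim: t => [|t IH] tT; first by rewrite !muln0.
rewrite !mulnSr !iotaD filter_cat IH 1?ltnW // map_cat add0n map_g_block //.
congr (_ ++ _).
have E : iota (K*L+K*t) K = iota (K*L+K*t) r ++ iota (K*L+K*t+r) (K-r)
  by rewrite -iotaD subnKC.
rewrite E filter_cat.
have hT : K*t + K <= K*T by rewrite -mulnSr leq_mul2l tT orbT.
rewrite (@eq_in_filter _ _ predT); last first.
  move=> x; rewrite mem_iota => /andP[h1 h2].
  rewrite inS_char //; last by lia.
  have -> : x - K*L = t*K + (x - K*L - K*t) by lia.
  rewrite modnMDl modn_small /=; lia.
rewrite filter_predT (@eq_in_filter _ _ pred0) ?filter_pred0 ?cats0 //.
move=> x; rewrite mem_iota => /andP[h1 h2].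
rewrite inS_char //; last by lia.
have -> : x - K*L = t*K + (x - K*L - K*t) by lia.
rewrite modnMDl modn_small /=; lia.
Qed.

Lemma alpha_sE K L T r i : 0 < K -> 0 < r -> r <= K -> 0 < i <= T ->
  alpha_s K L T r i = g K L r i.-1.
Proof.
move=> K0 r0 rK /andP[i0 iT].
rewrite /alpha_s /gasp_bound -{1}[K*L]add0n iotaD filter_cat.
rewrite (@eq_in_filter _ _ pred0) ?filter_pred0 /=; last first.
  move=> x; rewrite mem_iota => /andP[_ h]; rewrite inS_char //; first by lia.
  by apply: leq_trans h (leq_addr _ _).
rewrite add0n filter_all_iota // (nth_map 0) ?nth_iota ?size_iota //.
all: have : T <= r * T by rewrite leq_pmull.
all: lia.
Qed.

Lemma PsetP K L T r i x : x \in Pset K L T r i <-> exists k c,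
  [/\ 0 < k, k <= K + i - 1, 0 < c, c <= L + T & x = alpha K L T r k + beta K L T c].
Proof.
split.
- case/allpairsP => [[k c] [/= hk hc ->]]; move: hk hc; rewrite !mem_iota => hk hc.
  exists k, c; split => //; lia.
- case=> k [c [h1 h2 h3 h4 ->]]; apply/allpairsP; exists (k, c); rewrite !mem_iota /=.
  split => //; lia.
Qed.

Lemma mul_pred K c : 0 < c -> K * c.-1 + K = K * c.
Proof. by move=> c0; rewrite -mulnSr prednK. Qed.

Lemma low K L T r i x : 0 < K -> 0 < T -> 0 < i -> x + 2 <= K*L + K + T -> x \in Pset K L T r i.
Proof.
move=> K0 T0 i0 hx; apply/PsetP.
case: (ltnP x (K*L)) => h1.
  exists (x %% K).+1, (x %/ K).+1; split => //.
  - by have := ltn_pmod x K0; lia.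
  - by have := ltn_divLR x L K0; rewrite mulnC h1; lia.
  - rewrite /alpha /beta (ltn_pmod _ K0) (_ : x %/ K < L); last by rewrite ltn_divLR // mulnC.
    by rewrite /= addnC mulnC -divn_eq.
case: (ltnP x (K*L + K)) => h2.
  exists (x - K*L).+1, L.+1; split => //; try lia.
  rewrite /alpha /beta ltnn (_ : (x - K*L).+1 <= K); last by lia.
  rewrite subSn // subnn /=; lia.
exists K, (L + (x - K*L - K).+2); split => //; try lia.
rewrite /alpha /beta leqnn ifF; lia.
Qed.

Lemma upper K L T r k c : 0 < K -> 0 < k <= K -> 0 < c <= L + T ->
  alpha K L T r k + beta K L T c + 2 <= K*L + K + T.
Proof.
move=> K0 /andP[k0 kK] /andP[c0 cT]; rewrite /alpha /beta kK.
case: ifP => cL.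
  have := mul_pred K _ c0; have := leq_mul (leqnn K) cL; lia.
lia.
Qed.

Lemma alpha_hi K L T r j : 0 < K -> 0 < r -> r <= K -> j < T ->
  alpha K L T r (K + j.+1) = g K L r j.
Proof.
move=> K0 r0 rK jT; rewrite /alpha ifF; last by lia.
by rewrite alpha_sE //; [congr g; lia | lia].
Qed.

Lemma wit_p K L T r i j c : 0 < K -> 0 < r -> r <= K -> i <= T ->
  j.+1 < i -> c < L -> g K L r j + K*c \in Pset K L T r i.
Proof.
move=> K0 r0 rK iT ji cL; apply/PsetP; exists (K + j.+1), c.+1; split => //; try lia.
rewrite alpha_hi //; last by lia.
by rewrite /beta ifT. 
Qed.

Lemma wit_s K L T r i j m : 0 < K -> 0 < r -> r <= K -> i <= T ->
  j.+1 < i -> m < T -> g K L r j + K*L + m \in Pset K L T r i.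
Proof.
move=> K0 r0 rK iT ji mT; apply/PsetP; exists (K + j.+1), (L + m.+1); split => //; try lia.
rewrite alpha_hi //; last by lia.
rewrite /beta ifF; last by lia.
have -> : (L + m.+1 - L).-1 = m by lia.
by rewrite addnA.
Qed.

Lemma inv K L T r i x : 0 < K -> 0 < r -> r <= K -> i <= T ->
  x \in Pset K L T r i -> x + 2 <= K*L + K + T \/ exists j, j.+1 < i /\
   ((exists c, c < L /\ x = g K L r j + K*c) \/ (exists m, m < T /\ x = g K L r j + K*L + m)).
Proof.
move=> K0 r0 rK iT /PsetP [k [c [k0 ki c0 cT ->]]].
case: (leqP k K) => kK.
  by left; apply: upper => //; apply/andP.
right; exists (k - K).-1; split; first by lia.
have ek : alpha K L T r k = g K L r (k - K).-1.
  by rewrite {1}(_ : k = K + (k - K).-1.+1) ?alpha_hi //; lia.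
rewrite ek.
rewrite /beta; case: leqP => cL.
  by left; exists c.-1; split => //; lia.
right; exists (c - L).-1; split; first by lia.
by rewrite addnA.
Qed.

Lemma modeq K a b u v : a < K -> b < K -> a + K*u = b + K*v -> a = b.
Proof.
move=> ha hb e; have := congr1 (modn^~ K) e => /=.
by rewrite addnC [b + _]addnC ![K * _]mulnC !modnMDl !modn_small.
Qed.

Lemma g_small K L r j : j < r -> g K L r j = K*L + j.
Proof. by move=> jr; rewrite /g divn_small // modn_small // muln0 addn0. Qed.

Lemma gdec K L r j : 0 < r -> exists q s, [/\ j = q*r + s, s < r & g K L r j = K*L + K*q + s].
Proof.
move=> r0; exists (j %/ r), (j %% r); split => //; first exact: divn_eq.
exact: ltn_pmod.
Qed.

Lemma L_small K L T r i cc : 0 < K -> 0 < r -> r <= K -> 0 < i -> i <= r -> i <= T ->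
  cc < L ->
  (g K L r i.-1 + K*cc \in Pset K L T r i) = (K*cc + i <= K + T - 1).
Proof.
move=> K0 r0 rK i0 ir iT ccL.
have gi : g K L r i.-1 = K*L + i.-1 by rewrite g_small //; lia.
have hc : K*cc + K <= K*L by rewrite -mulnSr leq_mul2l ccL orbT.
apply/idP/idP.
- move/inv => [||||h|[j [ji [[c [cL e]]|[m [mT e]]]]]] //; try lia.
  + rewrite gi g_small in e; last by lia.
    have : j = i.-1 by apply: (modeq K j i.-1 c cc); lia.
    lia.
  + rewrite gi g_small in e; last by lia.
    lia.
- move=> h; apply: low => //; lia.
Qed.

Lemma L_big K L T r i cc : 0 < K -> 0 < r -> r <= K -> r < i -> i <= T ->
  cc < L -> g K L r i.-1 + K*cc \in Pset K L T r i.
Proof.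
move=> K0 r0 rK ri iT ccL.
have [q [s [en sr ->]]] := gdec K L r i.-1 r0.
have q0 : 0 < q.
  case: q en => // en; lia.
case: q q0 en => // q _ en.
have e1 : q.+1 * r = r + q * r by rewrite mulSn.
rewrite mulnS.
case: (ltnP cc.+1 L) => hc.
  have := @wit_p K L T r i (q*r + s) cc.+1 K0 r0 rK iT.
  rewrite gE // mulnS.
  have -> : K * L + (K + K * q) + s + K * cc = K * L + K * q + s + (K + K * cc) by lia.
  apply; lia.
have ecc : cc.+1 = L by lia.
have := @wit_s K L T r i (q*r + 0) s K0 r0 rK iT.
rewrite gE // !addn0.
have hL : K * L = K * cc + K by rewrite -ecc mulnS addnC.
have -> : K * L + (K + K * q) + s + K * cc = K * L + K * q + K * L + s by lia.
apply; lia.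
Qed.

Lemma qle r q q' s s' : s < r -> q'*r + s' < q*r + s -> q' <= q.
Proof.
move=> sr h; rewrite leqNgt; apply/negP => hq.
have := leq_mul hq (leqnn r); rewrite mulSn; lia.
Qed.

Lemma R_neg K L T r i q s m : 0 < K -> 0 < L -> 0 < r -> r <= K -> i <= T ->
  i.-1 = q*r + s -> s < r ->
  K*L + K*q + s + K*L + m \in Pset K L T r i ->
  K*L + K*q + s + K*L + m + 2 <= K*L + K + T \/
  exists q' s', [/\ s' < r, q'*r + s' < q*r + s & exists m', m' < T /\ K*q' + s' + m' = K*q + s + m].
Proof.
move=> K0 L0 r0 rK iT en sr.
move/inv => [||||h|[j [ji [[c [cL e]]|[m' [mT e]]]]]] //; first by left.
- have [q' [s' [ej sr' eg']]] := gdec K L r j r0.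
  rewrite eg' in e.
  have hq : q' <= q by apply: (qle r q q' s s' sr); lia.
  have h1 := leq_mul (leqnn K) hq.
  have h2 : K*c + K <= K*L by rewrite -mulnSr leq_mul2l cL orbT.
  lia.
- have [q' [s' [ej sr' eg']]] := gdec K L r j r0.
  rewrite eg' in e.
  right; exists q', s'; split => //; first by lia.
  exists m'; split => //; lia.
Qed.

Lemma R_char K L T r i m : 0 < K -> 0 < L -> 0 < T -> 0 < r -> r <= K -> 0 < i <= T -> m < T ->
  (g K L r i.-1 + K*L + m \in Pset K L T r i) =
  (if i.-1 == 0 then K*L + m + 2 <= K + T
   else if i.-1 %% r != 0 then m + 2 <= T else m + K + 2 <= T + r).
Proof.
move=> K0 L0 T0 r0 rK /andP[i0 iT] mT.
have hKL : K <= K*L by rewrite leq_pmulr.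
case: (posnP i.-1) => [n0 | n0].
  rewrite n0 g_small //; apply/idP/idP.
    move/inv => [||||h|[j [ji _]]] //; lia.
  move=> h; apply: low => //; lia.

have [q [s [en sr eg]]] := gdec K L r i.-1 r0.
have es : i.-1 %% r = s by rewrite en modnMDl modn_small.
rewrite es eg.
case: (posnP s) => [s0|s0].
  rewrite /=.
  have q0 : 0 < q by case: q en eg => //; lia.
  have hq : K <= K*q by rewrite leq_pmulr.
  apply/idP/idP.
    move/(@R_neg _ _ _ _ _ _ _ _ K0 L0 r0 rK iT en sr) => [h|[q' [s' [sr' hlt [m' [mT' e]]]]]] //; try lia.
    case: (ltnP q' q) => hqq.
      have := leq_mul (leqnn K) hqq; rewrite mulnS; lia.
    have eq : q' = q by have := qle r q q' s s' sr hlt; lia.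
    subst q'; lia.
  move=> h.
  case: q q0 en eg hq => // q _ en eg hq.
  have := @wit_s K L T r i (q*r + r.-1) (m + K - r + 1) K0 r0 rK iT.
  rewrite gE; last by lia.
  have -> : K * L + K * q + r.-1 + K * L + (m + K - r + 1) = K * L + K * q.+1 + s + K * L + m.
    rewrite mulnS; lia.
  apply; last by lia.
  rewrite mulSn in en; lia.
rewrite /=.
apply/idP/idP.
  move/(@R_neg _ _ _ _ _ _ _ _ K0 L0 r0 rK iT en sr) => [h|[q' [s' [sr' hlt [m' [mT' e]]]]]] //; try lia.
  case: (ltnP q' q) => hqq.
    have := leq_mul (leqnn K) hqq; rewrite mulnS; lia.
  have eq : q' = q by have := qle r q q' s s' sr hlt; lia.
  subst q'; lia.
move=> h.
have := @wit_s K L T r i (q*r + s.-1) m.+1 K0 r0 rK iT.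
rewrite gE; last by lia.
have -> : K * L + K * q + s.-1 + K * L + m.+1 = K * L + K * q + s + K * L + m by lia.
apply; lia.
Qed.

Lemma size_uf (f : nat -> nat) (P : pred nat) s : uniq s -> {in s &, injective f} ->
  size (undup [seq x <- map f s | P x]) = count (fun c => P (f c)) s.
Proof.
move=> us fi; rewrite undup_id ?size_filter ?count_map //.
by apply: filter_uniq; rewrite map_inj_in_uniq.
Qed.

Lemma count_thr (P : pred nat) a n M : {in iota a n, forall c, P c = (c < a + M)} ->
  count P (iota a n) = minn n M.
Proof.
move=> H; rewrite (eq_in_count H).
have E : iota a n = iota a (minn n M) ++ iota (a + minn n M) (n - minn n M)
  by rewrite -iotaD subnKC // geq_minl.
rewrite E count_cat (@eq_in_count _ _ predT) ?count_predT ?size_iota; last first.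
  by move=> x; rewrite mem_iota /=; lia.
rewrite (@eq_in_count _ _ pred0) ?count_pred0 ?addn0 //.
by move=> x; rewrite mem_iota /=; lia.
Qed.

Lemma Lsize K L T r i : 0 < K -> 0 < r -> r <= K -> 0 < i <= T ->
  size (Lset K L T r i) = count (fun c => g K L r i.-1 + K * c.-1 \in Pset K L T r i) (iota 1 L).
Proof.
move=> K0 r0 rK hi; rewrite /Lset size_uf ?iota_uniq //.
  apply: eq_in_count => c; rewrite mem_iota => hc.
  by rewrite alpha_sE // /beta ifT //; lia.
move=> c1 c2; rewrite !mem_iota => h1 h2.
rewrite /beta !ifT; try lia.
move/addnI/eqP; rewrite eqn_pmul2l //; lia.
Qed.

Lemma Rsize K L T r i : 0 < K -> 0 < r -> r <= K -> 0 < i <= T ->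
  size (Rset K L T r i) = count (fun c => g K L r i.-1 + K*L + (c - L).-1 \in Pset K L T r i)
     (iota (L+1) T).
Proof.
move=> K0 r0 rK hi; rewrite /Rset size_uf ?iota_uniq //.
  apply: eq_in_count => c; rewrite mem_iota => hc.
  by rewrite alpha_sE // /beta ifF ?addnA //; lia.
move=> c1 c2; rewrite !mem_iota => h1 h2.
rewrite /beta !ifF; lia.
Qed.

Local Open Scope ring_scope.

Theorem lemma1 (K L T r : nat) :
  (0 < K)%N -> (0 < L)%N -> (0 < T)%N -> (L <= K)%N ->
  (1 <= r)%N -> (r <= minn K T)%N ->
  forall i : nat, (1 <= i <= T)%N ->
    ((size (Lset K L T r i))%:Z =
       if (i <= r)%N
       then Num.min (L%:Z) (2 + ((T%:Z - 1 - i%:Z) %/ K%:Z)%Z)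
       else L%:Z)
    /\
    ((size (Rset K L T r i))%:Z =
       if i == 1%N then Num.max 0 (K%:Z + T%:Z - K%:Z * L%:Z - 1)
       else if (i == 1 %[mod r])%N then Num.max 0 (T%:Z - K%:Z + r%:Z - 1)
       else T%:Z - 1).
Proof.
move=> K0 L0 T0 LK r0 rm i hi.
have rK : (r <= K)%N by move: rm; rewrite leq_min => /andP[].
have rT : (r <= T)%N by move: rm; rewrite leq_min => /andP[].
have hi' := hi; move/andP: hi' => [i0 iT].
split.
  rewrite Lsize //.
  case: (leqP i r) => ir.
    rewrite (@count_thr _ 1 L ((K + T - 1 - i) %/ K).+1)%N; last first.
      move=> c; change nat in c; rewrite mem_iota => /andP[hc1 hc2].
      rewrite L_small //; try lia.
      set D := ((K + T - 1 - i) %/ K)%N.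
      have -> : (c < 1 + D.+1)%N = (c.-1 <= D)%N by lia.
      by rewrite leq_divRL //; lia.
    have -> : (T%:Z - 1 - i%:Z) = (-1) * K%:Z + (K + T - 1 - i)%N%:Z by lia.
    rewrite divzMDl; last by lia.
    rewrite divz_nat; lia.
  rewrite (@eq_in_count _ _ predT) ?count_predT ?size_iota //.
  move=> c; change nat in c; rewrite mem_iota => /andP[hc1 hc2] /=.
  have := @L_big K L T r i c.-1 K0 r0 rK ir iT; apply; lia.
rewrite Rsize //.
have hKL : (K <= K*L)%N by rewrite leq_pmulr.
case: (posnP i.-1) => [n0|n0].
  have i1 : i = 1%N by lia.
  rewrite i1 eqxx.
  rewrite (@count_thr _ (L+1) T (K + T - 1 - K*L))%N; first lia.
  move=> c; change nat in c; rewrite mem_iota => /andP[hc1 hc2].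
  rewrite R_char //; try lia.
  rewrite /=; lia.
have i1 : (i == 1)%N = false by apply/negbTE; lia.
rewrite i1.
have hmod : (i == 1 %[mod r])%N = (i.-1 %% r == 0)%N.
  have := eqn_modDr 1 i.-1 0 r.
  by rewrite addn1 prednK // add0n mod0n.
rewrite hmod.
case: (posnP (i.-1 %% r)%N) => [s0|s0].
  rewrite (@count_thr _ (L+1) T (T + r - K - 1))%N; first lia.
  move=> c; change nat in c; rewrite mem_iota => /andP[hc1 hc2].
  rewrite R_char //; try lia.
  rewrite s0 /= (gtn_eqF n0) /=; lia.
rewrite (@count_thr _ (L+1) T (T - 1))%N; first lia.
move=> c; change nat in c; rewrite mem_iota => /andP[hc1 hc2].
rewrite R_char //; try lia.
rewrite (gtn_eqF n0) /= -lt0n s0 /=; lia.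
Qed.
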